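(* Let $\mathbf{X}$ be a set of discrete random variables with sample space $\Omega(\mathbf{X})$, let $O$ be a positive unital circuit over $\mathbf{X}$, let $\rho$ be a density matrix of matching size, and let $q:\Omega(\mathbf{X})\to[0,1]$. Let $Q(\mathbf{x})=q(\mathbf{x})O(\mathbf{x})$ (a NoisePUnC). Then $\pi_{\mathbf{X}}(\mathbf{x})=\operatorname{Tr}[Q(\mathbf{x})\rho]$ is a sub-complete probability distribution: $\pi_{\mathbf{X}}(\mathbf{x})\ge 0$ for all $\mathbf{x}$ and $\sum_{\mathbf{x}\in\Omega(\mathbf{X})}\pi_{\mathbf{X}}(\mathbf{x})\le1$.
   Context: A density matrix is a PSD complex matrix of trace one; a POVM is a finite family of PSD matrices summing to the identity. A quantum operation from $d\times d$ to $d'\times d'$ matrices is $\Phi(A)=\sum_jK_jAK_j^*$ with $d'\times d$ matrices $K_j$, $\sum_jK_j^*K_j\le\mathbb{1}$ (Loewner order); it is unital if $\Phi(\mathbb{1}_d)=\mathbb{1}_{d'}$. A partition circuit over $\mathbf{X}=\{X_0,\dots,X_{N-1}\}$ is a rooted binary tree whose leaves are in bijection with the variables (leaf $k$ carries $X_k$ with finite sample space $\Omega(X_k)$), each internal unit $k$ having two children $k_l,k_r$; $\mathbf{x}_k$ denotes an assignment to the variables at leaves below $k$. A positive unital circuit assigns to each leaf $k$ a POVM $\{E_{x_k}\}_{x_k\in\Omega(X_k)}$ and to each internal unit $k$ a unital quantum operation $\Phi_k$, computing $O_k(\mathbf{x}_k)=E_{x_k}$ at leaves and $O_k(\mathbf{x}_k)=\Phi_k(O_{k_l}(\mathbf{x}_{k_l})\otimes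 O_{k_r}(\mathbf{x}_{k_r}))$ at internal units ($\otimes$ the Kronecker product); $O(\mathbf{x})=O_{\mathrm{root}}(\mathbf{x})$. A function on a finite set is a sub-complete probability distribution if its values are nonnegative and sum to at most $1$. *)

(* Defs.v *)
(* Complex scalars: an arbitrary numClosedFieldType C
   (e.g. the complex numbers); order on C: 0 <= z iff z is a nonnegative real. *)
From HB Require Import structures.
From mathcomp Require Import all_boot all_order all_algebra.
From mathcomp Require Import mxtens.
Set Implicit Arguments. Unset Strict Implicit. Unset Printing Implicit Defensive.
Import Order.TTheory GRing.Theory Num.Theory.
Local Open Scope ring_scope.

Section QDefs.
Variable C : numClosedFieldType.

Definition ctrmx {m n} (A : 'M[C]_(m, n)) : 'M[C]_(n, m) := (map_mx Num.conj A)^T.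

Definition psd {d} (A : 'M[C]_d) : Prop :=
  forall v : 'cV[C]_d, 0 <= (ctrmx v *m A *m v) 0 0.

Definition loewner_le {d} (A B : 'M[C]_d) : Prop := psd (B - A).

Definition density_matrix {d} (rho : 'M[C]_d) : Prop := psd rho /\ \tr rho = 1.

Definition is_POVM {d} {I : finType} (E : I -> 'M[C]_d) : Prop :=
  (forall a, psd (E a)) /\ \sum_(a : I) E a = 1%:M.

Definition kraus_apply {d' d} (K : seq 'M[C]_(d', d)) (A : 'M[C]_d) : 'M[C]_d' :=
  \sum_(Kj <- K) Kj *m A *m ctrmx Kj.

Definition quantum_operation {d' d} (K : seq 'M[C]_(d', d)) : Prop :=
  loewner_le (\sum_(Kj <- K) ctrmx Kj *m Kj) 1%:M.

Definition unital_quantum_operation {d' d} (K : seq 'M[C]_(d', d)) : Prop :=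
  quantum_operation K /\ kraus_apply K 1%:M = 1%:M.

Definition sub_complete {I : finType} (f : I -> C) : Prop :=
  (forall x, 0 <= f x) /\ \sum_(x : I) f x <= 1.
End QDefs.

(* Circuits over variables X_0..X_{N-1}, X_k with finite sample space T k.
   circuit d : a (binary-tree) circuit whose output is a d x d matrix.
   Node K l r : internal unit with operation Phi given by Kraus family K,
   mapping (dl*dr) x (dl*dr) matrices to d x d matrices. *)
Inductive circuit (C : numClosedFieldType) (N : nat) (T : 'I_N -> finType)
  : nat -> Type :=
| Leaf : forall (k : 'I_N) (d : nat), (T k -> 'M[C]_d) -> circuit C T d
| Node : forall (d dl dr : nat), seq 'M[C]_(d, dl * dr) ->
    circuit C T dl -> circuit C T dr -> circuit C T d.

Section Circuits.
Variables (C : numClosedFieldType) (N : nat) (T : 'I_N -> finType).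

Definition assignment := {dffun forall k : 'I_N, T k}.

Fixpoint leaves {d} (c : circuit C T d) : seq 'I_N :=
  match c with
  | Leaf k _ _ => [:: k]
  | Node _ _ _ _ l r => leaves l ++ leaves r
  end.

Definition partition_circuit {d} (c : circuit C T d) : Prop :=
  perm_eq (leaves c) (enum 'I_N).

Fixpoint positive_unital {d} (c : circuit C T d) : Prop :=
  match c with
  | Leaf k _ E => is_POVM E
  | Node _ _ _ K l r =>
      unital_quantum_operation K /\ positive_unital l /\ positive_unital r
  end.

Fixpoint circuit_eval {d} (c : circuit C T d) (x : assignment) : 'M[C]_d :=
  match c in circuit _ _ d0 return 'M[C]_d0 with
  | Leaf k _ E => E (x k)
  | Node _ _ _ K l r => kraus_apply K (circuit_eval l x *t circuit_eval r x)
  end.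
End Circuits.

(* Main.v *)
Require Import Defs.
From HB Require Import structures.
From mathcomp Require Import all_boot all_order all_algebra.
From mathcomp Require Import mxtens sesquilinear spectral.
From mathcomp Require Import ring.
Set Implicit Arguments. Unset Strict Implicit. Unset Printing Implicit Defensive.
Import Order.TTheory GRing.Theory Num.Theory.
Local Open Scope ring_scope.

Section Psd0.
Variable C : numClosedFieldType.

Lemma ctrmxE m n (A : 'M[C]_(m, n)) i j : ctrmx A i j = (A j i)^*.
Proof. by rewrite /ctrmx !mxE. Qed.

Lemma ctrmx_mul m n p (A : 'M[C]_(m, n)) (B : 'M[C]_(n, p)) :
  ctrmx (A *m B) = ctrmx B *m ctrmx A.
Proof. by rewrite /ctrmx map_mxM trmx_mul. Qed.

Lemma ctrmxK m n (A : 'M[C]_(m, n)) : ctrmx (ctrmx A) = A.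
Proof. by apply/matrixP => i j; rewrite !ctrmxE conjCK. Qed.

Lemma ctrmxD m n (A B : 'M[C]_(m, n)) : ctrmx (A + B) = ctrmx A + ctrmx B.
Proof. by apply/matrixP => i j; rewrite /ctrmx !mxE rmorphD. Qed.

Lemma ctrmxZ m n c (A : 'M[C]_(m, n)) : ctrmx (c *: A) = c^* *: ctrmx A.
Proof. by apply/matrixP => i j; rewrite /ctrmx !mxE rmorphM. Qed.

Lemma ctrmx_tens m n p q (A : 'M[C]_(m, n)) (B : 'M[C]_(p, q)) :
  ctrmx (A *t B) = ctrmx A *t ctrmx B.
Proof. by rewrite /ctrmx map_mxT trmx_tens. Qed.

Lemma psd_rank1 d k (W : 'M[C]_(d, k)) : psd (W *m ctrmx W).
Proof.
move=> v; set x := ctrmx W *m v.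
have -> : ctrmx v *m (W *m ctrmx W) *m v = ctrmx x *m x.
  by rewrite /x ctrmx_mul ctrmxK !mulmxA.
rewrite mxE; apply: sumr_ge0 => l _; rewrite ctrmxE mulrC; exact: mul_conjC_ge0.
Qed.

Lemma psd0 d : psd (0 : 'M[C]_d).
Proof. by move=> v; rewrite mulmx0 mul0mx mxE. Qed.

Lemma psdD d (A B : 'M[C]_d) : psd A -> psd B -> psd (A + B).
Proof.
by move=> hA hB v; rewrite mulmxDr mulmxDl mxE addr_ge0.
Qed.

Lemma psdZ d c (A : 'M[C]_d) : 0 <= c -> psd A -> psd (c *: A).
Proof.
by move=> hc hA v; rewrite -scalemxAr -scalemxAl mxE mulr_ge0.
Qed.

Lemma psd_sum d (I : Type) (s : seq I) (P : pred I) (F : I -> 'M[C]_d) :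
  (forall i, P i -> psd (F i)) -> psd (\sum_(i <- s | P i) F i).
Proof.
move=> h; apply: (big_ind (fun A => psd A)) => //; [exact: psd0 | exact: psdD].
Qed.

Lemma psd_cong d d' (K : 'M[C]_(d', d)) (A : 'M[C]_d) :
  psd A -> psd (K *m A *m ctrmx K).
Proof.
move=> hA v; have := hA (ctrmx K *m v).
by rewrite ctrmx_mul ctrmxK !mulmxA.
Qed.

Lemma psd_kraus d' d (K : seq 'M[C]_(d', d)) (A : 'M[C]_d) :
  psd A -> psd (kraus_apply K A).
Proof. by move=> hA; apply: psd_sum => Kj _; apply: psd_cong. Qed.


Lemma herm_aux (p r a b a' b' : C) :
  p + a' + (b' + r) = p + a + (b + r) ->
  p + ('i^* * a') + ((- 'i)^* * b' + (- 'i)^* * ('i^* * r)) =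
  p + 'i * a + (- 'i * b + - 'i * ('i * r)) -> a' = b.
Proof.
rewrite rmorphN /= conjCi opprK => H1 H2.
have key : (a' - b) *+ 2 = (p + a' + (b' + r) - (p + a + (b + r)))
   + 'i * (p + (- 'i * a') + ('i * b' + 'i * (- 'i * r)) -
           (p + 'i * a + (- 'i * b + - 'i * ('i * r))))
   + ('i ^+ 2 + 1) * (a' - b' + a - b) by ring.
move: key; rewrite H1 H2 !subrr sqrCi addNr mul0r mulr0 !addr0.
by move/eqP; rewrite mulrn_eq0 /= subr_eq0 => /eqP.
Qed.

Lemma ctrmx_delta m n (i : 'I_m) (j : 'I_n) :
  ctrmx (delta_mx i j : 'M[C]_(m, n)) = delta_mx j i.
Proof. by apply/matrixP => x y; rewrite ctrmxE !mxE rmorph_nat andbC. Qed.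

Section Herm.
Variables (d : nat) (A : 'M[C]_d).
Hypothesis hA : psd A.
Let Q (u v : 'cV[C]_d) := (ctrmx u *m A *m v) 0 0.

Let QDl u u' v : Q (u + u') v = Q u v + Q u' v.
Proof. by rewrite /Q ctrmxD !mulmxDl mxE. Qed.
Let QDr u v v' : Q u (v + v') = Q u v + Q u v'.
Proof. by rewrite /Q mulmxDr mxE. Qed.
Let QZl c u v : Q (c *: u) v = c^* * Q u v.
Proof. by rewrite /Q ctrmxZ -!scalemxAl mxE. Qed.
Let QZr c u v : Q u (c *: v) = c * Q u v.
Proof. by rewrite /Q -scalemxAr mxE. Qed.
Let Qreal u : (Q u u)^* = Q u u.
Proof. exact: geC0_conj (hA u). Qed.

Let Qsym u v : (Q u v)^* = Q v u.
Proof.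
have E1 := Qreal (u + v).
have E2 := Qreal (u + 'i *: v).
rewrite !QDl !QDr !QZl !QZr conjCi !rmorphD /= !Qreal in E1 E2.
rewrite !rmorphM /= !Qreal in E2.
exact: herm_aux E1 E2.
Qed.

Lemma psd_entry_conj i j : (A i j)^* = A j i.
Proof.
have E k l : Q (delta_mx k 0) (delta_mx l 0) = A k l.
  rewrite /Q; have -> : ctrmx (delta_mx k 0 : 'cV[C]_d) = delta_mx 0 k.
    apply/matrixP => x y; by rewrite ctrmxE !mxE rmorph_nat andbC.
  by rewrite -rowE -colE !mxE.
by rewrite -!E Qsym.
Qed.

Lemma psd_herm : A \is hermsymmx.
Proof.
apply/is_hermitianmxP; rewrite expr0 scale1r; apply/matrixP => i j.
by rewrite !mxE psd_entry_conj.
Qed.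

Lemma psd_decomp : exists (c : 'I_d -> C) (w : 'I_d -> 'cV[C]_d),
  (forall i, 0 <= c i) /\ A = \sum_i c i *: (w i *m ctrmx (w i)).
Proof.
have /hermitian_normalmx /orthomx_spectralP hs := psd_herm.
set P := spectralmx A in hs; set D := spectral_diag A in hs.
have Pu : P \is unitarymx := spectral_unitarymx A.
have PP : P *m ctrmx P = 1%:M.
  by rewrite /ctrmx map_trmx; apply/unitarymxP.
rewrite invmx_unitary // in hs.
have hA' : A = ctrmx P *m diag_mx D *m P by rewrite {1}hs /ctrmx map_trmx.
exists (fun i => D 0 i), (fun i => ctrmx P *m delta_mx i 0).
split.
- move=> i; have := hA (ctrmx P *m delta_mx i 0).
  rewrite ctrmx_mul ctrmxK ctrmx_delta {1}hA' !mulmxA.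
  rewrite -(mulmxA _ P) PP mulmx1 -(mulmxA _ P) PP mulmx1 -rowE -colE !mxE.
  by rewrite eqxx mulr1n.
- rewrite {1}hA' diag_mx_sum_delta mulmx_sumr mulmx_suml; apply: eq_bigr => i _.
  rewrite ctrmx_mul ctrmxK ctrmx_delta -scalemxAr -scalemxAl; congr (_ *: _).
  by rewrite -(mul_delta_mx (0 : 'I_1)) !mulmxA.
Qed.
End Herm.

Lemma tensmxDl m n p q (A A' : 'M[C]_(m, n)) (B : 'M[C]_(p, q)) :
  (A + A') *t B = A *t B + A' *t B.
Proof. by apply/matrixP => i j; rewrite !mxE mulrDl. Qed.

Lemma tensmxDr m n p q (A : 'M[C]_(m, n)) (B B' : 'M[C]_(p, q)) :
  A *t (B + B') = A *t B + A *t B'.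
Proof. by apply/matrixP => i j; rewrite !mxE mulrDr. Qed.

Lemma tensmxZl m n p q c (A : 'M[C]_(m, n)) (B : 'M[C]_(p, q)) :
  (c *: A) *t B = c *: (A *t B).
Proof. by apply/matrixP => i j; rewrite !mxE mulrA. Qed.

Lemma tensmxZr m n p q c (A : 'M[C]_(m, n)) (B : 'M[C]_(p, q)) :
  A *t (c *: B) = c *: (A *t B).
Proof. by apply/matrixP => i j; rewrite !mxE mulrCA. Qed.

Lemma tensmx_suml m n p q (I : Type) (s : seq I) (P : pred I)
  (F : I -> 'M[C]_(m, n)) (B : 'M[C]_(p, q)) :
  (\sum_(i <- s | P i) F i) *t B = \sum_(i <- s | P i) (F i *t B).
Proof.
by apply: (big_morph (fun A => A *t B)) => [A A'|]; rewrite ?tensmxDl ?tens0mx.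
Qed.

Lemma tensmx_sumr m n p q (I : Type) (s : seq I) (P : pred I)
  (A : 'M[C]_(m, n)) (F : I -> 'M[C]_(p, q)) :
  A *t (\sum_(i <- s | P i) F i) = \sum_(i <- s | P i) (A *t F i).
Proof.
by apply: (big_morph (fun B => A *t B)) => [B B'|]; rewrite ?tensmxDr ?tensmx0.
Qed.

Lemma psd_tens dl dr (A : 'M[C]_dl) (B : 'M[C]_dr) :
  psd A -> psd B -> psd (A *t B).
Proof.
move=> /psd_decomp [c [w [c0 ->]]] /psd_decomp [c' [w' [c0' ->]]].
rewrite tensmx_suml; apply: psd_sum => i _; rewrite tensmx_sumr.
apply: psd_sum => j _; rewrite tensmxZl tensmxZr scalerA.
apply: psdZ; first exact: mulr_ge0.
rewrite -tensmx_mul -ctrmx_tens; exact: psd_rank1.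
Qed.

Lemma trace_psd d (A rho : 'M[C]_d) : psd A -> psd rho -> 0 <= \tr (A *m rho).
Proof.
move=> /psd_decomp [c [w [c0 ->]]] hr.
rewrite mulmx_suml linear_sum /=; apply: sumr_ge0 => i _.
rewrite -scalemxAl mxtraceZ; apply: mulr_ge0 => //.
by rewrite -mulmxA mxtrace_mulC trace_mx11.
Qed.
End Psd0.
Section Comb.
Variables (N : nat) (T : 'I_N -> finType).
Local Notation Om := (assignment T).

Definition dep_on (L : seq 'I_N) (X : Type) (F : Om -> X) :=
  forall x y : Om, (forall k, k \in L -> x k = y k) -> F x = F y.

Definition mix (L : seq 'I_N) (x y : Om) : Om :=
  @finfun _ (fun k => T k) (fun k => if k \in L then x k else y k).

Lemma mixE L x y k : mix L x y k = if k \in L then x k else y k.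
Proof. by rewrite /mix ffunE. Qed.

Lemma mix_inv L : involutive (fun p : Om * Om => (mix L p.1 p.2, mix L p.2 p.1)).
Proof.
move=> [x y] /=; congr (_, _); apply/ffunP => k; rewrite !mixE;
  by case: (k \in L).
Qed.

Lemma sum_pair_mix (V : nmodType) (L : seq 'I_N) (F : Om -> Om -> V) :
  \sum_(x : Om) \sum_(y : Om) F x y =
  \sum_(x : Om) \sum_(y : Om) F (mix L x y) (mix L y x).
Proof.
rewrite !pair_big /=.
rewrite (reindex_inj (inv_inj (mix_inv L))) /=.
by [].
Qed.

Lemma sum_const_Om (V : nmodType) (v : V) : \sum_(x : Om) v = v *+ #|Om|.
Proof. by rewrite sumr_const. Qed.


Definition upd {k : 'I_N} (x : Om) (t : T k) : Om :=
  @finfun _ (fun j => T j) (@dfwith _ (fun j => T j) (fun j => x j) k t).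

Lemma upd_in k x (t : T k) : upd x t k = t.
Proof. by rewrite /upd ffunE dfwith_in. Qed.

Lemma upd_out k x (t : T k) j : k != j -> upd x t j = x j.
Proof. by move=> ne; rewrite /upd ffunE dfwith_out. Qed.

Lemma upd_inv k : involutive (fun p : Om * T k => (upd p.1 p.2, p.1 k)).
Proof.
move=> [x t] /=; rewrite upd_in; congr (_, _); apply/ffunP => j.
case: (eqVneq k j) => [<-|ne]; first by rewrite upd_in.
by rewrite !upd_out.
Qed.

Lemma sum_leaf (V : nmodType) k (E : T k -> V) :
  (\sum_(x : Om) E (x k)) *+ #|T k| = (\sum_(t : T k) E t) *+ #|Om|.
Proof.
have H : \sum_(p : Om * T k) E p.2 = \sum_(p : Om * T k) E (p.1 k) :=
  reindex_inj (P := xpredT) (F := fun p : Om * T k => E p.2) (inv_inj (@upd_inv k)).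
rewrite -(pair_bigA _ (fun (x : Om) (t : T k) => E t)) -(pair_bigA _ (fun (x : Om) (t : T k) => E (x k))) in H.
rewrite -sum_const_Om H -sumrMnl; apply: eq_bigr => x _.
by rewrite sumr_const.
Qed.
End Comb.

Section Circ.
Variables (C : numClosedFieldType) (N : nat) (T : 'I_N -> finType).
Local Notation Om := (assignment T).

Lemma natmul_inj m n (X Y : 'M[C]_(m, n)) k :
  (0 < k)%N -> X *+ k = Y *+ k -> X = Y.
Proof.
move=> k0; rewrite -!scaler_nat => /(congr1 (fun Z => k%:R^-1 *: Z)).
by rewrite !scalerA mulVf ?scale1r // pnatr_eq0 -lt0n.
Qed.

Lemma kraus_sum d' d (K : seq 'M[C]_(d', d)) (I : finType) (F : I -> 'M[C]_d) :
  \sum_i kraus_apply K (F i) = kraus_apply K (\sum_i F i).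
Proof.
rewrite /kraus_apply exchange_big /=; apply: eq_bigr => Kj _.
by rewrite mulmx_sumr mulmx_suml.
Qed.

Lemma kraus_natmul d' d (K : seq 'M[C]_(d', d)) (A : 'M[C]_d) k :
  kraus_apply K (A *+ k) = kraus_apply K A *+ k.
Proof.
rewrite /kraus_apply -sumrMnl; apply: eq_bigr => Kj _.
by rewrite -!scaler_nat -scalemxAr -scalemxAl.
Qed.

Lemma tens_natmul m n p q (A : 'M[C]_(m, n)) (B : 'M[C]_(p, q)) a b :
  (A *+ a) *t (B *+ b) = (A *t B) *+ (a * b).
Proof. by rewrite -!scaler_nat tensmxZl tensmxZr scalerA -natrM. Qed.

Lemma tens11 m n : (1%:M : 'M[C]_m) *t (1%:M : 'M[C]_n) = 1%:M.
Proof.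
apply/matrixP => i j; rewrite !mxE -natrM mulnb -xpair_eqE -!surjective_pairing.
by rewrite (inj_eq (can_inj (@mxtens_unindexK _ _))).
Qed.

Lemma sum_tens_mix m n p q (L R : seq 'I_N) (A : Om -> 'M[C]_(m, n))
  (B : Om -> 'M[C]_(p, q)) :
  dep_on L A -> dep_on R B -> (forall k, k \in R -> k \notin L) ->
  (\sum_x A x) *t (\sum_y B y) = (\sum_x (A x *t B x)) *+ #|Om|.
Proof.
move=> hA hB dis.
rewrite tensmx_suml; under eq_bigr do rewrite tensmx_sumr.
rewrite (sum_pair_mix L).
rewrite -sumrMnl; apply: eq_bigr => x _; rewrite -sum_const_Om; apply: eq_bigr => y _.
have -> : A (mix L x y) = A x by apply: hA => k kin; rewrite mixE kin.
have -> // : B (mix L y x) = B x.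
apply: hB => k kin; rewrite mixE.
by rewrite (negbTE (dis k kin)).
Qed.

Lemma circuit_dep d (c : circuit C T d) : dep_on (leaves c) (circuit_eval c).
Proof.
elim: c => [k d' E | d' dl dr K l IHl r IHr] x y h /=.
  by rewrite (h k) ?mem_head.
rewrite (IHl x y) ?(IHr x y) // => k kin; apply: h; by rewrite mem_cat kin ?orbT.
Qed.

Lemma circuit_psd d (c : circuit C T d) :
  positive_unital c -> forall x, psd (circuit_eval c x).
Proof.
elim: c => [k d' E | d' dl dr K l IHl r IHr] /=.
  by move=> [hE _] x; exact: hE.
move=> [_ [hl hr]] x; apply: psd_kraus; apply: psd_tens; [exact: IHl | exact: IHr].
Qed.

Lemma circuit_sum d (c : circuit C T d) :
  (0 < #|Om|)%N -> uniq (leaves c) -> positive_unital c ->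
  (\sum_x circuit_eval c x) *+ (\prod_(k <- leaves c) #|T k|) = 1%:M *+ #|Om|.
Proof.
move=> n0; elim: c => [k d' E | d' dl dr K l IHl r IHr] /=.
  by move=> _ [_ hsum]; rewrite big_seq1 sum_leaf hsum.
rewrite cat_uniq => /and3P [ul dis ur] [[_ hunit] [pl pr]].
have Hl := IHl ul pl; have Hr := IHr ur pr.
have Hmix := @sum_tens_mix _ _ _ _ (leaves l) (leaves r) _ _
  (@circuit_dep _ l) (@circuit_dep _ r)
  (fun k kin => (hasPn dis k kin)).
rewrite big_cat /= kraus_sum -kraus_natmul.
set M := \sum_x (circuit_eval l x *t circuit_eval r x).
set Pl := \prod_(k <- leaves l) _ in Hl *.
set Pr := \prod_(k <- leaves r) _ in Hr *.
have E : M *+ (Pl * Pr) *+ #|Om| = 1%:M *+ #|Om| *+ #|Om|.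
  rewrite -mulrnA (mulnC _ #|Om|) mulrnA.
  have -> : M *+ #|Om| = (\sum_x circuit_eval l x) *t (\sum_x circuit_eval r x).
    by apply: esym; exact: Hmix.
  rewrite -tens_natmul Hl Hr tens_natmul tens11.
  by rewrite mulrnA.
apply: (natmul_inj n0).
by rewrite -kraus_natmul E !kraus_natmul hunit.
Qed.

Lemma prod_card (s : seq 'I_N) :
  perm_eq s (enum 'I_N) -> \prod_(k <- s) #|T k| = #|Om|.
Proof.
move=> h; rewrite (perm_big _ h) /= card_dep_ffun foldrE big_image /= -big_enum.
by [].
Qed.
End Circ.

Unset Implicit Arguments.

Theorem proposition16 (C : numClosedFieldType) (N : nat) (T : 'I_N -> finType)
  (d : nat) (O : circuit C T d) (rho : 'M[C]_d) (q : assignment T -> C) :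
  partition_circuit O ->
  positive_unital O ->
  density_matrix rho ->
  (forall x, 0 <= q x <= 1) ->
  sub_complete (fun x : assignment T => \tr ((q x *: circuit_eval O x) *m rho)).
Proof.
move=> hpart hpos [hrho trrho] hq.
have tr0 x : 0 <= \tr (circuit_eval O x *m rho).
  by apply: trace_psd => //; exact: circuit_psd.
split.
  move=> x; rewrite -scalemxAl mxtraceZ; apply: mulr_ge0 => //.
  by case/andP: (hq x).
apply: (@le_trans _ _ (\sum_x \tr (circuit_eval O x *m rho))).
  apply: ler_sum => x _; rewrite -scalemxAl mxtraceZ.
  case/andP: (hq x) => q0 q1.
  by rewrite -[leRHS]mul1r ler_wpM2r.
have [n0|npos] := posnP #|assignment T|.
  rewrite big1 // => x _; exfalso; move: n0; move/card0_eq/(_ x).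
  by rewrite inE.
rewrite -linear_sum /= -mulmx_suml.
have uO : uniq (leaves O) by rewrite (perm_uniq hpart) enum_uniq.
have := circuit_sum npos uO hpos; rewrite prod_card // => /(natmul_inj npos) ->.
by rewrite mul1mx trrho.
Qed.
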